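(* Let $k$ be a field and $\mu=\nu=(4,2)$. Then the matrix problem $\mathcal{P}_k(\mu,\nu)$ has at least $|k^\times|$ orbits; in particular it has infinitely many orbits whenever $k$ is infinite (i.e. it is of infinite type).
   Context: For partitions $\mu$ of $m$ and $\nu$ of $n$ and a field $k$, the matrix problem $\mathcal{P}_k(\mu,\nu)$ is the action of the group $C_{GL_m(k)}(J_\mu(0)) \times C_{GL_n(k)}(J_\nu(0))$ on the quotient space $Q = M_{m,n}(k)/\{wJ_\nu(0) - J_\mu(0)w : w\in M_{m,n}(k)\}$ given by $(X,Y)\cdot[v] = [XvY^{-1}]$. Here $J_r(0)$ is the $r\times r$ matrix with $1$ in each $(i+1,i)$ entry and $0$ elsewhere, and $J_\mu(0) = \bigoplus_i J_{\mu_i}(0)$. (Equivalently, $Q$ is the space of $s\times t$ matrices with $(i,j)$ entry in $k[x]/(x^{\min(\mu_i,\nu_j)})$, acted on by the unit groups of $k[x]_\mu$ and $k[x]_\nu$.) *)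

(* Defs.v *)
From mathcomp Require Import all_boot all_order all_algebra.
Set Implicit Arguments. Unset Strict Implicit. Unset Printing Implicit Defensive.
Import GRing.Theory.
Local Open Scope ring_scope.

Definition Jblock (k : fieldType) (r : nat) : 'M[k]_r :=
  \matrix_(i < r, j < r) (if i == j.+1 :> nat then 1 else 0).

Fixpoint Jmu (k : fieldType) (mu : seq nat) : 'M[k]_(sumn mu) :=
  match mu return 'M[k]_(sumn mu) with
  | [::] => 0
  | r :: mu' => block_mx (Jblock k r) 0 0 (Jmu k mu')
  end.

Definition in_centralizerGL (k : fieldType) (mu : seq nat)
  (X : 'M[k]_(sumn mu)) : Prop :=
  X \in unitmx /\ X *m Jmu k mu = Jmu k mu *m X.

(* [v] = [v'] in Q = M_{m,n}(k) / { w J_nu(0) - J_mu(0) w }. *)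
Definition Qeq (k : fieldType) (mu nu : seq nat)
  (v v' : 'M[k]_(sumn mu, sumn nu)) : Prop :=
  exists w : 'M[k]_(sumn mu, sumn nu), v - v' = w *m Jmu k nu - Jmu k mu *m w.

Definition same_orbit (k : fieldType) (mu nu : seq nat)
  (v v' : 'M[k]_(sumn mu, sumn nu)) : Prop :=
  exists (X : 'M[k]_(sumn mu)) (Y : 'M[k]_(sumn nu)),
    [/\ @in_centralizerGL k mu X, @in_centralizerGL k nu Y &
        @Qeq k mu nu (X *m v *m invmx Y) v'].

(* Main.v *)
Require Import Defs.
From mathcomp Require Import all_boot all_order all_algebra.
From mathcomp Require Import ring.
Import GRing.Theory.
Local Open Scope ring_scope.

Section S.
Variable k : fieldType.
Local Notation M6 := 'M[k]_6.

Definition o0 : 'I_6 := @Ordinal 6 0 isT.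
Definition o1 : 'I_6 := @Ordinal 6 1 isT.
Definition o2 : 'I_6 := @Ordinal 6 2 isT.
Definition o3 : 'I_6 := @Ordinal 6 3 isT.
Definition o4 : 'I_6 := @Ordinal 6 4 isT.
Definition o5 : 'I_6 := @Ordinal 6 5 isT.

Lemma sum6 (F : 'I_6 -> k) : \sum_(i < 6) F i = F o0 + F o1 + F o2 + F o3 + F o4 + F o5.
Proof.
rewrite !big_ord_recl big_ord0 addr0 !addrA.
repeat congr (_ + _); by congr F; apply: val_inj.
Qed.

Lemma ord6P (P : 'I_6 -> Prop) : P o0 -> P o1 -> P o2 -> P o3 -> P o4 -> P o5 -> forall i, P i.
Proof.
move=> H0 H1 H2 H3 H4 H5 [[|[|[|[|[|[|i]]]]]] Hi] //.
- by have -> : Ordinal Hi = o0 by apply: val_inj.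
- by have -> : Ordinal Hi = o1 by apply: val_inj.
- by have -> : Ordinal Hi = o2 by apply: val_inj.
- by have -> : Ordinal Hi = o3 by apply: val_inj.
- by have -> : Ordinal Hi = o4 by apply: val_inj.
- by have -> : Ordinal Hi = o5 by apply: val_inj.
Qed.

Definition J6 : M6 := \matrix_(i, j) (if ((i:nat) == j.+1) && ((i:nat) != 4%N) then 1 else 0).

Lemma JmuE : Jmu k [:: 4%N; 2%N] = J6.
Proof.
apply/matrixP => i j; rewrite /= !mxE.
case: splitP => [i1 Hi | i2 Hi]; rewrite !mxE; case: splitP => [j1 Hj | j2 Hj]; rewrite ?mxE.
- rewrite Hi Hj. by case: i1 {Hi} => [[|[|[|[|?]]]] ?] //; case: j1 {Hj} => [[|[|[|[|?]]]] ?].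
- rewrite Hi Hj. case: i1 {Hi} => [[|[|[|[|?]]]] ?] //; case: j2 {Hj} => [[|[|?]] ?] //.
- rewrite Hi Hj. case: (splitP i2) => [i3 Hi3|i3 Hi3]; rewrite ?mxE; last by case: i3 {Hi3}.
  rewrite Hi3. by case: i3 {Hi3} => [[|[|?]] ?] //; case: j1 {Hj} => [[|[|[|[|?]]]] ?].
- rewrite Hi Hj. case: (splitP i2) => [i3 Hi3|i3 Hi3]; rewrite ?mxE; last by case: i3 {Hi3}.
  case: (splitP j2) => [j3 Hj3|j3 Hj3]; rewrite ?mxE; last by case: j3 {Hj3}.
  rewrite Hi3 Hj3. by case: i3 {Hi3} => [[|[|?]] ?] //; case: j3 {Hj3} => [[|[|?]] ?].
Qed.

Definition mkA (a0 a1 a2 a3 a4 a5 a6 a7 a8 a9 : k) : M6 :=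
  \matrix_(i, j)
   match (i : nat), (j : nat) with
   | 0, 0 => a3
   | 1, 0 => a2 | 1, 1 => a3
   | 2, 0 => a1 | 2, 1 => a2 | 2, 2 => a3 | 2, 4 => a5
   | 3, 0 => a0 | 3, 1 => a1 | 3, 2 => a2 | 3, 3 => a3 | 3, 4 => a4 | 3, 5 => a5
   | 4, 0 => a7 | 4, 4 => a9
   | 5, 0 => a6 | 5, 1 => a7 | 5, 4 => a8 | 5, 5 => a9
   | _, _ => 0
   end.

Ltac simp6 := rewrite ?mxE ?sum6 ?mxE /= ?(mulr0, mul0r, mulr1, mul1r, addr0, add0r).

Lemma XJ0 (X : M6) i : (X *m J6) i o0 = X i o1.
Proof. by rewrite mxE sum6 !mxE /= ?(mulr0, mul0r, mulr1, mul1r, addr0, add0r). Qed.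
Lemma XJ1 (X : M6) i : (X *m J6) i o1 = X i o2.
Proof. by rewrite mxE sum6 !mxE /= ?(mulr0, mul0r, mulr1, mul1r, addr0, add0r). Qed.
Lemma XJ2 (X : M6) i : (X *m J6) i o2 = X i o3.
Proof. by rewrite mxE sum6 !mxE /= ?(mulr0, mul0r, mulr1, mul1r, addr0, add0r). Qed.
Lemma XJ3 (X : M6) i : (X *m J6) i o3 = 0.
Proof. by rewrite mxE sum6 !mxE /= ?(mulr0, mul0r, mulr1, mul1r, addr0, add0r). Qed.
Lemma XJ4 (X : M6) i : (X *m J6) i o4 = X i o5.
Proof. by rewrite mxE sum6 !mxE /= ?(mulr0, mul0r, mulr1, mul1r, addr0, add0r). Qed.
Lemma XJ5 (X : M6) i : (X *m J6) i o5 = 0.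
Proof. by rewrite mxE sum6 !mxE /= ?(mulr0, mul0r, mulr1, mul1r, addr0, add0r). Qed.
Lemma JX0 (X : M6) j : (J6 *m X) o0 j = 0.
Proof. by rewrite mxE sum6 !mxE /= ?(mulr0, mul0r, mulr1, mul1r, addr0, add0r). Qed.
Lemma JX1 (X : M6) j : (J6 *m X) o1 j = X o0 j.
Proof. by rewrite mxE sum6 !mxE /= ?(mulr0, mul0r, mulr1, mul1r, addr0, add0r). Qed.
Lemma JX2 (X : M6) j : (J6 *m X) o2 j = X o1 j.
Proof. by rewrite mxE sum6 !mxE /= ?(mulr0, mul0r, mulr1, mul1r, addr0, add0r). Qed.
Lemma JX3 (X : M6) j : (J6 *m X) o3 j = X o2 j.
Proof. by rewrite mxE sum6 !mxE /= ?(mulr0, mul0r, mulr1, mul1r, addr0, add0r). Qed.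
Lemma JX4 (X : M6) j : (J6 *m X) o4 j = 0.
Proof. by rewrite mxE sum6 !mxE /= ?(mulr0, mul0r, mulr1, mul1r, addr0, add0r). Qed.
Lemma JX5 (X : M6) j : (J6 *m X) o5 j = X o4 j.
Proof. by rewrite mxE sum6 !mxE /= ?(mulr0, mul0r, mulr1, mul1r, addr0, add0r). Qed.

Lemma paramE (X : M6) : X *m J6 = J6 *m X ->
  X = mkA (X o3 o0) (X o2 o0) (X o1 o0) (X o0 o0) (X o3 o4) (X o2 o4) (X o5 o0) (X o4 o0) (X o5 o4) (X o4 o4).
Proof.
move=> H.
have E : forall i j, (X *m J6) i j = (J6 *m X) i j by move=> i j; rewrite H.
have E00 := E o0 o0. have E01 := E o0 o1. have E02 := E o0 o2. have E03 := E o0 o3. have E04 := E o0 o4. have E05 := E o0 o5.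
have E10 := E o1 o0. have E11 := E o1 o1. have E12 := E o1 o2. have E13 := E o1 o3. have E14 := E o1 o4. have E15 := E o1 o5.
have E20 := E o2 o0. have E21 := E o2 o1. have E22 := E o2 o2. have E23 := E o2 o3. have E24 := E o2 o4. have E25 := E o2 o5.
have E30 := E o3 o0. have E31 := E o3 o1. have E32 := E o3 o2. have E33 := E o3 o3. have E34 := E o3 o4. have E35 := E o3 o5.
have E40 := E o4 o0. have E41 := E o4 o1. have E42 := E o4 o2. have E43 := E o4 o3. have E44 := E o4 o4. have E45 := E o4 o5.
have E50 := E o5 o0. have E51 := E o5 o1. have E52 := E o5 o2. have E53 := E o5 o3. have E54 := E o5 o4. have E55 := E o5 o5.
clear E H.
rewrite ?XJ0 ?XJ1 ?XJ2 ?XJ3 ?XJ4 ?XJ5 ?JX0 ?JX1 ?JX2 ?JX3 ?JX4 ?JX5 in E00 E01 E02 E03 E04 E05 E10 E11 E12 E13 E14 E15 E20 E21 E22 E23 E24 E25 E30 E31 E32 E33 E34 E35 E40 E41 E42 E43 E44 E45 E50 E51 E52 E53 E54 E55.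
have F00 : X o0 o1 = 0 := E00.
have F01 : X o0 o2 = 0 := E01.
have F02 : X o0 o3 = 0 := E02.
have F04 : X o0 o5 = 0 := E04.
have F10 : X o1 o1 = X o0 o0 := E10.
have F11 : X o1 o2 = X o0 o1 := E11.
have F12 : X o1 o3 = X o0 o2 := E12.
have F13 : 0 = X o0 o3 := E13.
have F14 : X o1 o5 = X o0 o4 := E14.
have F15 : 0 = X o0 o5 := E15.
have F20 : X o2 o1 = X o1 o0 := E20.
have F21 : X o2 o2 = X o1 o1 := E21.
have F22 : X o2 o3 = X o1 o2 := E22.
have F23 : 0 = X o1 o3 := E23.
have F24 : X o2 o5 = X o1 o4 := E24.
have F25 : 0 = X o1 o5 := E25.
have F30 : X o3 o1 = X o2 o0 := E30.
have F31 : X o3 o2 = X o2 o1 := E31.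
have F32 : X o3 o3 = X o2 o2 := E32.
have F33 : 0 = X o2 o3 := E33.
have F34 : X o3 o5 = X o2 o4 := E34.
have F35 : 0 = X o2 o5 := E35.
have F40 : X o4 o1 = 0 := E40.
have F41 : X o4 o2 = 0 := E41.
have F42 : X o4 o3 = 0 := E42.
have F44 : X o4 o5 = 0 := E44.
have F50 : X o5 o1 = X o4 o0 := E50.
have F51 : X o5 o2 = X o4 o1 := E51.
have F52 : X o5 o3 = X o4 o2 := E52.
have F53 : 0 = X o4 o3 := E53.
have F54 : X o5 o5 = X o4 o4 := E54.
have F55 : 0 = X o4 o5 := E55.
clear E00 E01 E02 E03 E04 E05 E10 E11 E12 E13 E14 E15 E20 E21 E22 E23 E24 E25 E30 E31 E32 E33 E34 E35 E40 E41 E42 E43 E44 E45 E50 E51 E52 E53 E54 E55.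
(apply/matrixP; apply: ord6P; apply: ord6P; rewrite mxE /=; congruence).
Qed.

Definition c0 (v : M6) := v o0 o3.
Definition c1 (v : M6) := v o0 o2 + v o1 o3.
Definition c2 (v : M6) := v o0 o1 + v o1 o2 + v o2 o3.
Definition c4 (v : M6) := v o4 o3.
Definition c5 (v : M6) := v o4 o2 + v o5 o3.
Definition c6 (v : M6) := v o0 o5.
Definition c7 (v : M6) := v o0 o4 + v o1 o5.
Definition c8 (v : M6) := v o4 o5.

Lemma cimg (w : M6) : let I := w *m J6 - J6 *m w in
  [/\ c0 I = 0, c1 I = 0, c2 I = 0, c4 I = 0 & [/\ c5 I = 0, c6 I = 0, c7 I = 0 & c8 I = 0]].
Proof.
rewrite /c0 /c1 /c2 /c4 /c5 /c6 /c7 /c8 !(mxE, sum6) /=.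
by split; [ring|ring|ring|ring|split; ring].
Qed.

Lemma mul3E (A u B : M6) i j : (A *m u *m B) i j = \sum_(l<6) (\sum_(m<6) A i m * u m l) * B l j.
Proof. by rewrite mxE; apply: eq_bigr => l _; rewrite mxE. Qed.

Lemma mkAE a0 a1 a2 a3 a4 a5 a6 a7 a8 a9 i j : mkA a0 a1 a2 a3 a4 a5 a6 a7 a8 a9 i j =
   match (i : nat), (j : nat) with
   | 0, 0 => a3
   | 1, 0 => a2 | 1, 1 => a3
   | 2, 0 => a1 | 2, 1 => a2 | 2, 2 => a3 | 2, 4 => a5
   | 3, 0 => a0 | 3, 1 => a1 | 3, 2 => a2 | 3, 3 => a3 | 3, 4 => a4 | 3, 5 => a5
   | 4, 0 => a7 | 4, 4 => a9
   | 5, 0 => a6 | 5, 1 => a7 | 5, 4 => a8 | 5, 5 => a9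
   | _, _ => 0
   end.
Proof. by rewrite mxE. Qed.

Lemma act_stratum (x0 x1 x2 x3 x4 x5 x6 x7 x8 x9 y0 y1 y2 y3 y4 y5 y6 y7 y8 y9 : k) (u : M6) :
  c0 u = 0 -> c1 u = 0 -> c4 u = 0 -> c6 u = 0 ->
  (c0 (mkA x0 x1 x2 x3 x4 x5 x6 x7 x8 x9 *m u *m mkA y0 y1 y2 y3 y4 y5 y6 y7 y8 y9) = 0 /\ c1 (mkA x0 x1 x2 x3 x4 x5 x6 x7 x8 x9 *m u *m mkA y0 y1 y2 y3 y4 y5 y6 y7 y8 y9) = 0 /\ c4 (mkA x0 x1 x2 x3 x4 x5 x6 x7 x8 x9 *m u *m mkA y0 y1 y2 y3 y4 y5 y6 y7 y8 y9) = 0 /\ c6 (mkA x0 x1 x2 x3 x4 x5 x6 x7 x8 x9 *m u *m mkA y0 y1 y2 y3 y4 y5 y6 y7 y8 y9) = 0) /\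
  (c2 (mkA x0 x1 x2 x3 x4 x5 x6 x7 x8 x9 *m u *m mkA y0 y1 y2 y3 y4 y5 y6 y7 y8 y9) = x3 * y3 * c2 u /\ c5 (mkA x0 x1 x2 x3 x4 x5 x6 x7 x8 x9 *m u *m mkA y0 y1 y2 y3 y4 y5 y6 y7 y8 y9) = x9 * y3 * c5 u /\ c7 (mkA x0 x1 x2 x3 x4 x5 x6 x7 x8 x9 *m u *m mkA y0 y1 y2 y3 y4 y5 y6 y7 y8 y9) = x3 * y9 * c7 u /\ c8 (mkA x0 x1 x2 x3 x4 x5 x6 x7 x8 x9 *m u *m mkA y0 y1 y2 y3 y4 y5 y6 y7 y8 y9) = x9 * y9 * c8 u).
Proof.
rewrite /c0 /c1 /c2 /c4 /c5 /c6 /c7 /c8 => h0 h1 h4 h6.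
have h1' : u o0 o2 = - u o1 o3 by apply/eqP; rewrite -subr_eq0 opprK h1.
rewrite !mul3E !sum6 !mkAE /= h0 h1' h4 h6.
by split; (split; [ring|split; [ring|split; ring]]).
Qed.

Lemma invJ (X : M6) : X \in unitmx -> X *m J6 = J6 *m X -> invmx X *m J6 = J6 *m invmx X.
Proof.
move=> uX cX.
have := congr1 (fun M => invmx X *m M *m invmx X) cX.
by rewrite /= !mulmxA mulVmx // mul1mx -!mulmxA mulmxV // mulmx1 => ->.
Qed.

Lemma diag_nz (X Xi : M6) : X *m J6 = J6 *m X -> Xi *m J6 = J6 *m Xi -> X *m Xi = 1%:M ->
  X o0 o0 != 0 /\ X o4 o4 != 0.
Proof.
move=> cX cXi E.
have e0 := congr1 (fun M : M6 => M o0 o0) E; have e4 := congr1 (fun M : M6 => M o4 o4) E.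
rewrite /= (paramE _ cX) (paramE _ cXi) !mxE !sum6 !mkAE /= in e0 e4.
rewrite !mulr0 !mul0r !addr0 !add0r in e0 e4.
split; apply/eqP => h; [move: e0|move: e4]; rewrite h mul0r => /eqP; by rewrite eq_sym oner_eq0.
Qed.

Lemma act_all (X W u : M6) : X *m J6 = J6 *m X -> W *m J6 = J6 *m W ->
  c0 u = 0 -> c1 u = 0 -> c4 u = 0 -> c6 u = 0 ->
  (c0 (X *m u *m W) = 0 /\ c1 (X *m u *m W) = 0 /\ c4 (X *m u *m W) = 0 /\ c6 (X *m u *m W) = 0) /\
  (c2 (X *m u *m W) = X o0 o0 * W o0 o0 * c2 u /\ c5 (X *m u *m W) = X o4 o4 * W o0 o0 * c5 u /\
   c7 (X *m u *m W) = X o0 o0 * W o4 o4 * c7 u /\ c8 (X *m u *m W) = X o4 o4 * W o4 o4 * c8 u).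
Proof.
move=> cX cW h0 h1 h4 h6.
have := act_stratum (X o3 o0) (X o2 o0) (X o1 o0) (X o0 o0) (X o3 o4) (X o2 o4) (X o5 o0) (X o4 o0) (X o5 o4) (X o4 o4)
  (W o3 o0) (W o2 o0) (W o1 o0) (W o0 o0) (W o3 o4) (W o2 o4) (W o5 o0) (W o4 o0) (W o5 o4) (W o4 o4) u h0 h1 h4 h6.
by rewrite -(paramE _ cX) -(paramE _ cW).
Qed.

Lemma csub (A B : M6) :
  [/\ c0 (A - B) = c0 A - c0 B, c1 (A - B) = c1 A - c1 B, c2 (A - B) = c2 A - c2 B, c4 (A - B) = c4 A - c4 B &
   [/\ c5 (A - B) = c5 A - c5 B, c6 (A - B) = c6 A - c6 B, c7 (A - B) = c7 A - c7 B & c8 (A - B) = c8 A - c8 B]].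
Proof.
rewrite /c0 /c1 /c2 /c4 /c5 /c6 /c7 /c8 !mxE.
by split; [ring|ring|ring|ring|split; ring].
Qed.

Definition inS (v : M6) : bool := [&& c0 v == 0, c1 v == 0, c4 v == 0 & c6 v == 0].
Definition inv (v : M6) : k :=
  if inS v && (c5 v * c7 v != 0) then c2 v * c8 v / (c5 v * c7 v) else 0.

Lemma inv_P (X W u : M6) : X *m J6 = J6 *m X -> W *m J6 = J6 *m W ->
  X o0 o0 != 0 -> X o4 o4 != 0 -> W o0 o0 != 0 -> W o4 o4 != 0 ->
  inS u -> inv (X *m u *m W) = inv u.
Proof.
move=> cX cW nx0 nx4 nw0 nw4 /and4P [/eqP h0 /eqP h1 /eqP h4 /eqP h6].
have [[e0 [e1 [e4 e6]]] [e2 [e5 [e7 e8]]]] := act_all X W u cX cW h0 h1 h4 h6.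
rewrite /inv /inS e0 e1 e4 e6 e2 e5 e7 e8 h0 h1 h4 h6 eqxx /=.
have -> : X o4 o4 * W o0 o0 * c5 u * (X o0 o0 * W o4 o4 * c7 u) =
   (X o0 o0 * X o4 o4 * W o0 o0 * W o4 o4) * (c5 u * c7 u) by ring.
have nz : X o0 o0 * X o4 o4 * W o0 o0 * W o4 o4 != 0 by rewrite !mulf_neq0.
rewrite mulf_eq0 (negbTE nz) /=.
case: eqP => // h57.
field.
by move/eqP: h57; rewrite mulf_eq0 negb_or => /andP [-> ->]; rewrite nx0 nx4 nw0 nw4.
Qed.
Lemma orbit_inv (u v : 'M[k]_(sumn [:: 4%N; 2%N])) :
  @same_orbit k [:: 4%N; 2%N] [:: 4%N; 2%N] u v -> inv u = inv v.
Proof.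
case=> X [Y [[uX cX] [uY cY] [w Hw]]].
rewrite JmuE in cX cY Hw.
have cW := invJ Y uY cY.
have cXi := invJ X uX cX.
have [nx0 nx4] := diag_nz X (invmx X) cX cXi (mulmxV uX).
have [nw0 nw4] := diag_nz (invmx Y) Y cW cY (mulVmx uY).
set W := invmx Y in cW nw0 nw4 Hw.
set P := X *m u *m W in Hw.
have ev : inv v = inv P.
  have := cimg w; rewrite /= -Hw => -[a0 a1 a2 a4 [a5 a6 a7 a8]].
  case: (csub P v) => b0 b1 b2 b4 [b5 b6 b7 b8].
  rewrite b0 in a0; rewrite b1 in a1; rewrite b2 in a2; rewrite b4 in a4.
  rewrite b5 in a5; rewrite b6 in a6; rewrite b7 in a7; rewrite b8 in a8.
  move/subr0_eq: a0 => a0; move/subr0_eq: a1 => a1; move/subr0_eq: a2 => a2; move/subr0_eq: a4 => a4.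
  move/subr0_eq: a5 => a5; move/subr0_eq: a6 => a6; move/subr0_eq: a7 => a7; move/subr0_eq: a8 => a8.
  by rewrite /inv /inS -a0 -a1 -a2 -a4 -a5 -a6 -a7 -a8.
case: (boolP (inS u)) => hu.
  by rewrite ev (inv_P X W u cX cW nx0 nx4 nw0 nw4 hu).
have nP : ~~ inS P.
  apply/negP => /and4P [/eqP p0 /eqP p1 /eqP p4 /eqP p6].
  have [[q0 [q1 [q4 q6]]] _] := act_all (invmx X) Y P cXi cY p0 p1 p4 p6.
  have eU : invmx X *m P *m Y = u.
    by rewrite /P /W !mulmxA mulVmx // mul1mx -mulmxA mulVmx // mulmx1.
  rewrite eU in q0 q1 q4 q6.
  by move/negP: hu; apply; rewrite /inS q0 q1 q4 q6 eqxx.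
by rewrite ev /inv (negbTE hu) (negbTE nP).
Qed.

Definition fam (a : k) : M6 := \matrix_(i, j)
  match (i : nat), (j : nat) with
  | 0, 1 => 1 | 4, 2 => 1 | 0, 4 => 1 | 4, 5 => a | _, _ => 0 end.

Lemma inv_fam a : inv (fam a) = a.
Proof.
rewrite /inv /inS /c0 /c1 /c2 /c4 /c5 /c6 /c7 /c8 !mxE /=.
rewrite !(addr0, add0r, mulr1, mul1r) eqxx oner_eq0 /=.
by rewrite divr1.
Qed.
End S.

Theorem mainTheorem7 (k : fieldType) :
  (exists f : k -> 'M[k]_(sumn [:: 4%N; 2%N], sumn [:: 4%N; 2%N]),
     forall a b : k, a != 0 -> b != 0 ->
       @same_orbit k [:: 4%N; 2%N] [:: 4%N; 2%N] (f a) (f b) -> a = b)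
  /\
  ((forall s : seq k, exists x : k, x \notin s) ->
   forall s : seq 'M[k]_(sumn [:: 4%N; 2%N], sumn [:: 4%N; 2%N]),
     exists v, forall u, u \in s -> ~ @same_orbit k [:: 4%N; 2%N] [:: 4%N; 2%N] u v).
Proof.
split.
  exists (@fam k) => a b _ _ H.
  by rewrite -(inv_fam k a) -(inv_fam k b); exact: (@orbit_inv k _ _ H).
move=> Hinf s.
have [x Hx] := Hinf [seq @inv k u | u <- s].
exists (fam k x) => u us H.
move/negP: Hx; apply.
rewrite -(inv_fam k x) -(@orbit_inv k _ _ H).
exact: map_f.
Qed.
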